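(* Let $f\in\mathbb V(\mathcal E_\oplus)$ and set $g:=-2\imath\,\Pi B(A-\imath B^\top TB)^{-1}f$. If $p\in\mathbb V(\Gamma_\oplus)$ solves $(I+\Pi S)p=g$, then $u:=(A-\imath B^\top TB)^{-1}(B^\top Tp+f)$ belongs to $\operatorname{range}(R)$, and $u_\Omega:=(R^\top R)^{-1}R^\top u$ (so that $Ru_\Omega=u$) satisfies $R^\top AR\,u_\Omega=R^\top f$; i.e. $u_\Omega$ is the unique solution of the global system $A_\Omega u_\Omega=f_\Omega$ with $A_\Omega:=R^\top AR$, $f_\Omega:=R^\top f$.
   Context: Let $\mathcal E$ be a finite set, $\mathcal E_1,\dots,\mathcal E_J$ subsets with $\mathcal E=\bigcup_j\mathcal E_j$, $\Sigma:=\bigcup_{1\le j<k\le J}(\mathcal E_j\cap\mathcal E_k)$, $\Gamma$ any set with $\Sigma\subset\Gamma\subset\mathcal E$, $\Gamma_j:=\Gamma\cap\mathcal E_j$. $\mathbb V(\mathcal F):=\mathbb C^{\mathcal F}$; $\mathbb V(\mathcal E_\oplus):=\prod_j\mathbb V(\mathcal E_j)$, $\mathbb V(\Gamma_\oplus):=\prod_j\mathbb V(\Gamma_j)$. Restrictions: $Rx=((x_e)_{e\in\mathcal E_1},\dots,(x_e)_{e\in\mathcal E_J})$ for $x\in\mathbb V(\mathcal E)$ ($R^\top R$ is the diagonal matrix with entries $\#\{j:e\in\mathcal E_j\}\ge1$); $Qx=((x_e)_{e\in\Gamma_1},\dots,(x_e)_{e\in\Gamma_J})$ for $x\in\mathbb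 V(\Gamma)$; $B_jx=(x_e)_{e\in\Gamma_j}$ for $x\in\mathbb V(\mathcal E_j)$, $B:=\mathrm{diag}(B_j)$; $\top$ is the non-conjugated transpose. For each $j$ let $T_j$ be a real symmetric positive definite matrix on $\mathbb V(\Gamma_j)$, $T:=\mathrm{diag}(T_1,\dots,T_J)$, $P:=Q(Q^\top TQ)^{-1}Q^\top T$, $\Pi:=2P-I$. Let $A=\mathrm{diag}(A_1,\dots,A_J)$, $A_j\in\mathbb C^{\mathcal E_j\times\mathcal E_j}$, satisfying (A1) $\operatorname{Im}(\bar v^\top Av)\le0$ for all $v\in\mathbb V(\mathcal E_\oplus)$ and (A2) $R^\top AR$ invertible; then $A-\imath B^\top TB$ is invertible. Scattering matrix: $S:=I+2\imath B(A-\imath B^\top TB)^{-1}B^\top T$. *)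

(* Defs.v *)
(* Complex scalars: an arbitrary numClosedFieldType C
   (e.g. algC, or complex R for a real closed field R). *)
From HB Require Import structures.
From mathcomp Require Import all_boot all_order all_algebra.
Set Implicit Arguments. Unset Strict Implicit. Unset Printing Implicit Defensive.
Import Order.TTheory GRing.Theory Num.Theory.
Local Open Scope ring_scope.

Section Defs.
Variable C : numClosedFieldType.
Variables (E : finType) (J : nat) (Ej : 'I_J -> {set E}) (Gam : {set E}).

Definition Sigma : {set E} :=
  \bigcup_(j < J) \bigcup_(k < J | (j < k)%N) (Ej j :&: Ej k).

(* index set of V(E_oplus) = prod_j V(E_j): pairs (j,e) with e in E_j *)
Definition Eidx : finType := {x : 'I_J * E | x.2 \in Ej x.1}.
(* index set of V(Gamma_oplus): pairs (j,e) with e in Gamma_j = Gamma ∩ E_j *)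
Definition Gidx : finType := {x : 'I_J * E | x.2 \in Gam :&: Ej x.1}.
Definition Gset : finType := {e : E | e \in Gam}.

Definition mx_of (X Y : finType) (f : X -> Y -> C) : 'M[C]_(#|X|, #|Y|) :=
  \matrix_(i, j) f (enum_val i) (enum_val j).

Definition Rmx : 'M[C]_(#|Eidx|, #|E|) :=
  mx_of (fun (p : Eidx) (e : E) => ((val p).2 == e)%:R).
Definition Qmx : 'M[C]_(#|Gidx|, #|Gset|) :=
  mx_of (fun (p : Gidx) (e : Gset) => ((val p).2 == val e)%:R).
(* B = diag(B_j), B_j : V(E_j) -> V(Gamma_j) restriction *)
Definition Bmx : 'M[C]_(#|Gidx|, #|Eidx|) :=
  mx_of (fun (p : Gidx) (q : Eidx) => (val p == val q)%:R).
Definition Tmx (Tj : 'I_J -> E -> E -> C) : 'M[C]_(#|Gidx|) :=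
  mx_of (fun (p q : Gidx) =>
    if (val p).1 == (val q).1 then Tj (val p).1 (val p).2 (val q).2 else 0).
Definition Amx (Aj : 'I_J -> E -> E -> C) : 'M[C]_(#|Eidx|) :=
  mx_of (fun (p q : Eidx) =>
    if (val p).1 == (val q).1 then Aj (val p).1 (val p).2 (val q).2 else 0).

Definition Pmx (Tj : 'I_J -> E -> E -> C) : 'M[C]_(#|Gidx|) :=
  Qmx *m invmx (Qmx^T *m Tmx Tj *m Qmx) *m Qmx^T *m Tmx Tj.
Definition PImx (Tj : 'I_J -> E -> E -> C) : 'M[C]_(#|Gidx|) :=
  2%:R *: Pmx Tj - 1%:M.
Definition Kmx (Aj Tj : 'I_J -> E -> E -> C) : 'M[C]_(#|Eidx|) :=
  Amx Aj - 'i *: (Bmx^T *m Tmx Tj *m Bmx).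
Definition Smx (Aj Tj : 'I_J -> E -> E -> C) : 'M[C]_(#|Gidx|) :=
  1%:M + (2%:R * 'i) *: (Bmx *m invmx (Kmx Aj Tj) *m Bmx^T *m Tmx Tj).

End Defs.

Definition real_sym_pd (C : numClosedFieldType) (E : finType) (G : {set E})
  (M : E -> E -> C) : Prop :=
  [/\ forall e e', e \in G -> e' \in G -> M e e' \is Num.real,
      forall e e', e \in G -> e' \in G -> M e e' = M e' e &
      forall v : E -> C, (forall e, v e \is Num.real) ->
        (exists2 e, e \in G & v e != 0) ->
        0 < \sum_(e in G) \sum_(e' in G) v e * M e e' * v e'].

(* Main.v *)
Require Import Defs.
From HB Require Import structures.
From mathcomp Require Import all_boot all_order all_algebra ring.
Import Order.TTheory GRing.Theory Num.Theory.
Local Open Scope ring_scope.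
Set Implicit Arguments. Unset Strict Implicit. Unset Printing Implicit Defensive.

Lemma inj_unit (F : fieldType) n (A : 'M[F]_n) :
  (forall x : 'cV_n, A *m x = 0 -> x = 0) -> A \in unitmx.
Proof.
move=> h; rewrite unitmxE unitfE -det_tr; apply/negP => /det0P [v nv hv].
have := h v^T; rewrite -(trmxK A) -trmx_mul hv trmx0 => /(_ erefl) /eqP.
by rewrite trmx_eq0 (negbTE nv).
Qed.

Lemma sum_collapse (C : numClosedFieldType) (Y : finType) (a : Y) (F : 'I_#|Y| -> C) :
  \sum_(k < #|Y|) (a == enum_val k)%:R * F k = F (enum_rank a).
Proof.
rewrite (bigD1 (enum_rank a)) //= enum_rankK eqxx mul1r big1 ?addr0 // => k nk.
suff -> : (a == enum_val k) = false by rewrite mul0r.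
by apply/negbTE; apply: contra nk => /eqP ->; rewrite enum_valK.
Qed.

Section S.
Variable C : numClosedFieldType.
Variables (E : finType) (J : nat) (Ej : 'I_J -> {set E}) (Gam : {set E}).
Variables (Aj Tj : 'I_J -> E -> E -> C).
Hypothesis hcover : \bigcup_(j < J) Ej j = [set: E].
Hypothesis hSigma : Sigma Ej \subset Gam.
Hypothesis hT : forall j : 'I_J, real_sym_pd (Gam :&: Ej j) (Tj j).

Local Notation Rm := (Rmx C Ej).
Local Notation Qm := (Qmx C Ej Gam).
Local Notation Bm := (Bmx C Ej Gam).
Local Notation Tm := (Tmx Ej Gam Tj).
Local Notation Am := (Amx Ej Aj).
Local Notation EI := (Eidx Ej).
Local Notation GI := (Gidx Ej Gam).
Local Notation GS := (Gset Gam).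

Lemma in_some_E (e : E) : exists j, e \in Ej j.
Proof.
have : e \in [set: E] by rewrite inE.
by rewrite -hcover => /bigcupP [j _ h]; exists j.
Qed.

Lemma Rmul (w : 'cV[C]_#|E|) i : (Rm *m w) i 0 = w (enum_rank (val (enum_val i)).2) 0.
Proof. by rewrite mxE -(sum_collapse _ (fun k => w k 0)); apply: eq_bigr => k _; rewrite !mxE. Qed.

Lemma Bmul (v : 'cV[C]_#|EI|) (g : GI) (q : EI) : val g = val q ->
  (Bm *m v) (enum_rank g) 0 = v (enum_rank q) 0.
Proof.
move=> hgq; rewrite mxE -(sum_collapse _ (fun k => v k 0)); apply: eq_bigr => k _.
by rewrite !mxE enum_rankK hgq.
Qed.

Lemma Qmul (y : 'cV[C]_#|GS|) (g : GI) (b : GS) : (val g).2 = val b ->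
  (Qm *m y) (enum_rank g) 0 = y (enum_rank b) 0.
Proof.
move=> hgb; rewrite mxE -(sum_collapse _ (fun k => y k 0)); apply: eq_bigr => k _.
by rewrite !mxE enum_rankK hgb.
Qed.


Lemma Qinj (y : 'cV[C]_#|GS|) : Qm *m y = 0 -> y = 0.
Proof.
move=> h; apply/matrixP => k l; rewrite (ord1 l) [RHS]mxE.
set b := enum_val k.
have hb : val b \in Gam := valP b.
have [j hj] := in_some_E (val b).
have hg : (j, val b).2 \in Gam :&: Ej (j, val b).1 by rewrite inE hb hj.
pose g : GI := exist _ (j, val b) hg.
by rewrite -[k]enum_valK -(Qmul y (g := g) (b := b)) // h mxE.
Qed.

Lemma Rinj (x : 'cV[C]_#|E|) : Rm *m x = 0 -> x = 0.
Proof.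
move=> h; apply/matrixP => k l; rewrite (ord1 l) [RHS]mxE.
set e := enum_val k.
have [j hj] := in_some_E e.
have hq : (j, e).2 \in Ej (j, e).1 by [].
pose q : EI := exist _ (j, e) hq.
rewrite -[k]enum_valK -/e; have := Rmul x (enum_rank q).
by rewrite h mxE enum_rankK /= => <-.
Qed.

Lemma in_Sigma (e : E) (j k : 'I_J) : j != k -> e \in Ej j -> e \in Ej k -> e \in Gam.
Proof.
move=> njk hj hk; apply: (subsetP hSigma); rewrite /Sigma.
case: (ltngtP j k) => [ljk|lkj|/val_inj ejk]; last by rewrite ejk eqxx in njk.
  by apply/bigcupP; exists j => //; apply/bigcupP; exists k => //; rewrite inE hj hk.
by apply/bigcupP; exists k => //; apply/bigcupP; exists j => //; rewrite inE hj hk.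
Qed.

Lemma consistent (v : 'cV[C]_#|EI|) (y : 'cV[C]_#|GS|) : Bm *m v = Qm *m y ->
  forall q q' : EI, (val q).2 = (val q').2 -> v (enum_rank q) 0 = v (enum_rank q') 0.
Proof.
move=> hv q q' hqq.
have [e1|ne1] := eqVneq (val q).1 (val q').1.
  have -> // : q = q' by apply: val_inj; case: (val q) (val q') e1 hqq => [a b] [c d] /= -> ->.
have hG : (val q).2 \in Gam.
  apply: (in_Sigma ne1 (valP q)); rewrite hqq; exact: (valP q').
have hg : (val q).2 \in Gam :&: Ej (val q).1 by rewrite inE hG; exact: (valP q).
have hg' : (val q').2 \in Gam :&: Ej (val q').1 by rewrite inE -hqq hG /=; rewrite hqq; exact: (valP q').
pose g : GI := exist _ (val q) hg.
pose g' : GI := exist _ (val q') hg'.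
pose b : GS := exist _ (val q).2 hG.
rewrite -(Bmul v (g := g)) // -(Bmul v (g := g')) // hv.
by rewrite (Qmul y (g := g) (b := b)) // (Qmul y (g := g') (b := b)).
Qed.

Lemma range_R (v : 'cV[C]_#|EI|) (y : 'cV[C]_#|GS|) : Bm *m v = Qm *m y ->
  exists w, Rm *m w = v.
Proof.
move=> hv.
exists (\col_k (if [pick i | (val (enum_val i : EI)).2 == enum_val k] is Some i
                then v i 0 else 0)).
apply/matrixP => i l; rewrite (ord1 l) Rmul mxE enum_rankK.
case: pickP => [i' /eqP hi' | /(_ i)]; last by rewrite eqxx.
by rewrite -[i']enum_valK -[i in RHS]enum_valK; apply: (consistent hv).
Qed.

Definition Gm : 'M[C]_(#|GS|, #|E|) := \matrix_(k, l) ((val (enum_val k : GS)) == enum_val l)%:R.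

Lemma BR_QG : Bm *m Rm = Qm *m Gm.
Proof.
apply/matrixP => r l; rewrite !mxE.
set g := enum_val r.
have hg := valP g.
have hq : (val g).2 \in Ej (val g).1 by move: hg; rewrite inE => /andP[].
have hb : (val g).2 \in Gam by move: hg; rewrite inE => /andP[].
pose q : EI := exist _ (val g) hq.
pose b : GS := exist _ (val g).2 hb.
transitivity (((val (enum_val (enum_rank q))).2 == enum_val l)%:R : C).
  rewrite -(sum_collapse q (fun k => ((val (enum_val k)).2 == enum_val l)%:R)).
  by apply: eq_bigr => k _; rewrite !mxE.
rewrite enum_rankK.
transitivity (\sum_(k < #|GS|) (b == enum_val k)%:R * ((val (enum_val k : GS)) == enum_val l)%:R : C).
  by rewrite sum_collapse enum_rankK.
by apply: eq_bigr => k _; rewrite !mxE.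
Qed.

Lemma F3 (s : 'cV[C]_#|GI|) : Qm^T *m s = 0 -> Rm^T *m Bm^T *m s = 0.
Proof.
by move=> h; rewrite -trmx_mul BR_QG trmx_mul -mulmxA h mulmx0.
Qed.

Lemma RtR_unit : Rm^T *m Rm \in unitmx.
Proof.
apply: inj_unit => x hx; apply/matrixP => a l; rewrite (ord1 l) [RHS]mxE.
have := congr1 (fun M : 'cV[C]_#|E| => M a 0) hx; rewrite -mulmxA mxE [RHS]mxE.
under eq_bigr => i _ do rewrite Rmul !mxE.
rewrite (eq_bigr (fun i => ((val (enum_val i : EI)).2 == enum_val a)%:R * x a 0)); last first.
  move=> i _; case: eqP => [->|_]; by rewrite ?enum_valK ?mul0r.
rewrite -mulr_suml => /eqP; rewrite mulf_eq0 => /orP[|/eqP //].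
have [j hj] := in_some_E (enum_val a).
have hq : (j, enum_val a).2 \in Ej (j, enum_val a).1 by [].
pose q : EI := exist _ (j, enum_val a) hq.
rewrite (bigD1 (enum_rank q)) //= enum_rankK eqxx.
rewrite paddr_eq0 ?oner_eq0 // ?ler01 //; last by apply: sumr_ge0 => i _; apply: ler0n.
Qed.


Lemma sumG (F : 'I_J * E -> C) :
  \sum_(k < #|GI|) F (val (enum_val k)) = \sum_(j < J) \sum_(e in Gam :&: Ej j) F (j, e).
Proof.
rewrite pair_big_dep /=.
rewrite (reindex_omap (val : GI -> 'I_J * E) insub) /=; last first.
  by move=> [j e] /= h; rewrite insubT.
rewrite -(big_enum_val (fun g : GI => F (val g))) /=.
apply: eq_big => [g|g _]; last by case: (val g).
by rewrite valK eqxx (valP g).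
Qed.


Definition Tt (a b : 'I_J * E) : C := if a.1 == b.1 then Tj a.1 a.2 b.2 else 0.
Definition Yv (x : 'cV[C]_#|GI|) (a : 'I_J * E) : C :=
  if (insub a : option GI) is Some g then x (enum_rank g) 0 else 0.

Lemma Yv_val x k : Yv x (val (enum_val k : GI)) = x k 0.
Proof. by rewrite /Yv valK enum_valK. Qed.

Lemma Tm_E k l : Tm k l = Tt (val (enum_val k : GI)) (val (enum_val l : GI)).
Proof. by rewrite mxE. Qed.

Lemma quadE (x : 'cV[C]_#|GI|) :
  (x^T *m Tm *m x) 0 0 =
  \sum_(j < J) \sum_(e in Gam :&: Ej j) \sum_(e' in Gam :&: Ej j)
     Yv x (j, e) * Tj j e e' * Yv x (j, e').
Proof.
rewrite mxE.
under eq_bigr => l _ do rewrite mxE mulr_suml.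
rewrite exchange_big /=.
transitivity (\sum_(k < #|GI|) \sum_(l < #|GI|)
   Yv x (val (enum_val k)) * Tt (val (enum_val k)) (val (enum_val l)) * Yv x (val (enum_val l))).
  apply: eq_bigr => k _; apply: eq_bigr => l _.
  by rewrite !mxE !Yv_val.
rewrite (sumG (fun a => \sum_(l < #|GI|) Yv x a * Tt a (val (enum_val l)) * Yv x (val (enum_val l)))).
apply: eq_bigr => j _; apply: eq_bigr => e _.
rewrite (sumG (fun b => Yv x (j, e) * Tt (j, e) b * Yv x b)).
rewrite (bigD1 j) //= [X in _ + X]big1 ?addr0; last first.
  move=> j' nj; apply: big1 => e' _; rewrite /Tt /= eq_sym (negbTE nj).
  by rewrite mulr0 mul0r.
by apply: eq_bigr => e' _; rewrite /Tt /= eqxx.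
Qed.

Lemma T_psd (x : 'cV[C]_#|GI|) : (forall k, x k 0 \is Num.real) ->
  0 <= (x^T *m Tm *m x) 0 0 /\ ((x^T *m Tm *m x) 0 0 = 0 -> x = 0).
Proof.
move=> xr.
have Yr : forall j e, Yv x (j, e) \is Num.real.
  by move=> j e; rewrite /Yv; case: insub => // g; rewrite ?real0.
set Qj := fun j => \sum_(e in Gam :&: Ej j) \sum_(e' in Gam :&: Ej j)
     Yv x (j, e) * Tj j e e' * Yv x (j, e').
have Qpos : forall j, (exists2 e, e \in Gam :&: Ej j & Yv x (j, e) != 0) -> 0 < Qj j.
  move=> j hex; have [_ _ h3] := hT j.
  exact: (h3 (fun e => Yv x (j, e)) (fun e => Yr j e) hex).
have Qge : forall j, 0 <= Qj j.
  move=> j; case: (pickP (fun e => (e \in Gam :&: Ej j) && (Yv x (j, e) != 0))).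
    by move=> e /andP[he hne]; apply/ltW/Qpos; exists e.
  move=> hn; rewrite /Qj big1 // => e he.
  have := hn e; rewrite he /= => /negbFE/eqP ->.
  by apply: big1 => e2 _; rewrite !mul0r.
rewrite quadE -/(\sum_(j < J) Qj j); split; first by apply: sumr_ge0.
move=> h0; have hz := psumr_eq0P (fun j _ => Qge j) h0.
apply/matrixP => k l; rewrite (ord1 l) [RHS]mxE -Yv_val.
set g := enum_val k.
have hg := valP g.
case: (val g) hg => j e /= hg.
apply/eqP; apply: contraT => hne.
have := Qpos j (ex_intro2 _ _ e hg hne).
by rewrite hz // ltxx.
Qed.


Lemma Tsym : Tm^T = Tm.
Proof.
apply/matrixP => k l; rewrite !mxE.
have hl := valP (enum_val l : GI); have hk := valP (enum_val k : GI).
case: (val (enum_val k : GI)) hk => a1 a2; case: (val (enum_val l : GI)) hl => b1 b2 /= hb ha.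
rewrite eq_sym; case: eqP => // eab; subst b1.
have [_ h2 _] := hT a1.
by rewrite h2.
Qed.

Lemma T_herm (z : 'cV[C]_#|GI|) :
  0 <= ((map_mx Num.conj z)^T *m Tm *m z) 0 0 /\
  (((map_mx Num.conj z)^T *m Tm *m z) 0 0 = 0 -> z = 0).
Proof.
pose x := map_mx (fun c => 'Re c) z; pose y := map_mx (fun c => 'Im c) z.
have xr : forall k, x k 0 \is Num.real by move=> k; rewrite mxE Creal_Re.
have yr : forall k, y k 0 \is Num.real by move=> k; rewrite mxE Creal_Im.
have hz : z = x + 'i *: y by apply/matrixP => k l; rewrite !mxE -Crect.
have hzc : map_mx Num.conj z = x - 'i *: y.
  by apply/matrixP => k l; rewrite !mxE {1}[z k l]Crect conjC_rect ?Creal_Re ?Creal_Im.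
have hd : (y^T *m Tm *m x) 0 0 = (x^T *m Tm *m y) 0 0.
  transitivity ((y^T *m Tm *m x)^T 0 0); first by rewrite [RHS]mxE.
  by rewrite !trmx_mul trmxK Tsym mulmxA.
have key : ((map_mx Num.conj z)^T *m Tm *m z) 0 0 =
           (x^T *m Tm *m x) 0 0 + (y^T *m Tm *m y) 0 0.
  rewrite hzc {1}hz linearB linearZ /= mulmxBl mulmxDr !mulmxBl -!scalemxAl -!scalemxAr.
  set a := x^T *m Tm *m x; set b := y^T *m Tm *m y; set c := x^T *m Tm *m y; set d := y^T *m Tm *m x.
  have hd' : d 0 0 = c 0 0 := hd. clearbody a b c d.
  rewrite !mxE hd' mulrA.
  have ii : 'i * 'i = -1 :> C by rewrite -expr2 sqrCi.
  rewrite ii mulN1r opprK addrA addrNK //.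
rewrite key; have [ha0 ha] := T_psd xr; have [hb0 hb] := T_psd yr.
split; first by rewrite addr_ge0.
move=> /eqP; rewrite paddr_eq0 // => /andP[/eqP/ha hx0 /eqP/hb hy0].
by rewrite hz hx0 hy0 scaler0 addr0.
Qed.


Lemma Bm_real : map_mx Num.conj Bm = Bm.
Proof. by apply/matrixP => k l; rewrite !mxE conjC_nat. Qed.
Lemma Qm_real : map_mx Num.conj Qm = Qm.
Proof. by apply/matrixP => k l; rewrite !mxE conjC_nat. Qed.

Lemma M_unit : Qm^T *m Tm *m Qm \in unitmx.
Proof.
apply: inj_unit => x hx.
have [_ h] := T_herm (Qm *m x).
apply: Qinj; apply: h.
rewrite (map_mxM Num.conj) Qm_real trmx_mul.
have -> : (map_mx Num.conj x)^T *m Qm^T *m Tm *m (Qm *m x)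
        = (map_mx Num.conj x)^T *m (Qm^T *m Tm *m Qm *m x) by rewrite !mulmxA.
by rewrite hx mulmx0 mxE.
Qed.

Hypothesis hA1 : forall v : 'cV[C]_(#|Eidx Ej|),
     'Im (((map_mx Num.conj v)^T *m Amx Ej Aj *m v) ord0 ord0) <= 0.
Hypothesis hA2 : (Rmx C Ej)^T *m Amx Ej Aj *m Rmx C Ej \in unitmx.

Lemma K_unit : Kmx Ej Gam Aj Tj \in unitmx.
Proof.
apply: inj_unit => v hv.
pose cv := map_mx Num.conj v.
have [s0 sz] := T_herm (Bm *m v).
set s := ((map_mx Num.conj (Bm *m v))^T *m Tm *m (Bm *m v)) 0 0 in s0 sz.
have e1 : (cv^T *m Kmx Ej Gam Aj Tj *m v) 0 0 = 0 by rewrite -mulmxA hv mulmx0 mxE.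
have e2 : (cv^T *m Kmx Ej Gam Aj Tj *m v) 0 0 = (cv^T *m Am *m v) 0 0 - 'i * s.
  rewrite /Kmx mulmxBr mulmxBl -scalemxAr -scalemxAl.
  have -> : forall (X Y : 'M[C]_1) a, (X - a *: Y) 0 0 = X 0 0 - a * Y 0 0.
    by move=> X Y a; rewrite !mxE.
  congr (_ - 'i * _); rewrite /s (map_mxM Num.conj) Bm_real trmx_mul.
  by rewrite !mulmxA.
have ha : (cv^T *m Am *m v) 0 0 = 'i * s by apply/eqP; rewrite -subr_eq0 -e2 e1.
have hI := hA1 v.
have hs : s = 0.
  apply/eqP; rewrite eq_le s0 andbT.
  move: hI; rewrite -/cv.
  have -> : (ord0 : 'I_1) = 0 by [].
  by rewrite ha ImMil; move/Creal_ReP: (ger0_real s0) => ->.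
have hBv : Bm *m v = 0 := sz hs.
have hAv : Am *m v = 0.
  have : Kmx Ej Gam Aj Tj *m v = Am *m v - 'i *: (Bm^T *m Tm *m (Bm *m v)).
    by rewrite /Kmx mulmxBl -scalemxAl !mulmxA.
  by rewrite hv hBv mulmx0 scaler0 subr0.
have [w hw] : exists w, Rm *m w = v.
  apply: (@range_R v 0); by rewrite hBv mulmx0.
have : Rm^T *m Am *m Rm *m w = 0 by rewrite -mulmxA hw -mulmxA hAv mulmx0.
move=> h; have : w = 0.
  by rewrite -(mulKmx hA2 w) h mulmx0.
by move=> w0; rewrite -hw w0 mulmx0.
Qed.


Lemma vec_eq_ring n (X Y : 'cV[C]_n) : (forall k, X k 0 = Y k 0) -> X = Y.
Proof. by move=> h; apply/matrixP => k l; rewrite (ord1 l). Qed.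

Lemma solve2 (G L Rr : C) : L = Rr -> 2%:R * G = L - Rr -> G = 0.
Proof.
move=> -> ; rewrite subrr => /eqP; rewrite mulf_eq0 pnatr_eq0 /= => /eqP //.
Qed.

Lemma solveC (x y z : C) : x + 2%:R * 'i * y - 'i * z = 0 ->
  x + 2%:R * 'i * y - 'i * y = 0 -> z = y.
Proof.
move=> e1 e2.
have : 'i * (y - z) = 0.
  transitivity ((x + 2%:R * 'i * y - 'i * z) - (x + 2%:R * 'i * y - 'i * y)); first by ring.
  by rewrite e1 e2 subrr.
by move/eqP; rewrite mulf_eq0 (negbTE (neq0Ci C)) /= subr_eq0 => /eqP.
Qed.

Lemma solveR (x y : C) : x + 2%:R * 'i * y - 'i * y = 0 -> x + 'i * y = 0.
Proof. by move=> e; rewrite -e; ring. Qed.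

Lemma main_sec (f : 'cV[C]_(#|Eidx Ej|)) (p : 'cV[C]_(#|Gidx Ej Gam|))
  (hp : (1%:M + PImx Ej Gam Tj *m Smx Ej Gam Aj Tj) *m p
        = - (2%:R * 'i) *: (PImx Ej Gam Tj *m Bmx C Ej Gam
                            *m invmx (Kmx Ej Gam Aj Tj) *m f)) :
  let u := invmx (Kmx Ej Gam Aj Tj) *m ((Bmx C Ej Gam)^T *m Tmx Ej Gam Tj *m p + f) in
  let uO := invmx ((Rmx C Ej)^T *m Rmx C Ej) *m (Rmx C Ej)^T *m u in
  [/\ exists w : 'cV[C]_(#|E|), Rmx C Ej *m w = u,
      Rmx C Ej *m uO = u,
      (Rmx C Ej)^T *m Amx Ej Aj *m Rmx C Ej *m uO = (Rmx C Ej)^T *m f &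
      forall v : 'cV[C]_(#|E|),
        (Rmx C Ej)^T *m Amx Ej Aj *m Rmx C Ej *m v = (Rmx C Ej)^T *m f -> v = uO].
Proof.
move=> u uO; move: hp.
set K := Kmx Ej Gam Aj Tj.
set N := invmx K.
have hKN : K *m N = 1%:M by rewrite mulmxV // K_unit.
set M := Qm^T *m Tm *m Qm.
set MI := invmx M.
have hMMI : M *m MI = 1%:M by rewrite mulmxV // M_unit.
set P := Pmx Ej Gam Tj.
have hP : P = Qm *m MI *m Qm^T *m Tm by [].
have hPP : P *m P = P.
  have -> : P *m P = Qm *m (MI *m M) *m MI *m Qm^T *m Tm.
    rewrite hP /M !mulmxA //.
  by rewrite mulVmx ?M_unit // mulmx1 hP.
have hPi : forall w : 'cV[C]_#|GI|, PImx Ej Gam Tj *m w = 2%:R *: (P *m w) - w.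
  by move=> w; rewrite /PImx -/P mulmxBl mul1mx -scalemxAl.
set v1 := Bm *m N *m Bm^T *m Tm *m p.
set v2 := Bm *m N *m f.
set c := Bm *m u.
have hc : c = v1 + v2.
  by rewrite /c /u !mulmxDr !mulmxA.
have hSp : Smx Ej Gam Aj Tj *m p = p + (2%:R * 'i) *: v1.
  by rewrite /Smx mulmxDl mul1mx -scalemxAl.
have hPc : P *m c = P *m v1 + P *m v2 by rewrite hc mulmxDr.
have L : (1%:M + PImx Ej Gam Tj *m Smx Ej Gam Aj Tj) *m p
   = p + (2%:R *: (P *m p + (2%:R * 'i) *: (P *m v1)) - (p + (2%:R * 'i) *: v1)).
  by rewrite mulmxDl mul1mx -mulmxA hSp hPi mulmxDr -scalemxAr.
have Rr : PImx Ej Gam Tj *m Bm *m N *m f = 2%:R *: (P *m v2) - v2.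
  by rewrite -hPi /v2 !mulmxA.
rewrite L Rr => hp.
have E1 : P *m p + (2%:R * 'i) *: (P *m c) - 'i *: c = 0.
  rewrite hPc hc; move: hp.
  set X1 := P *m p; set X2 := P *m v1; set X3 := P *m v2.
  clearbody X1 X2 X3 v1 v2 => hp.
  apply: vec_eq_ring => k.
  have := congr1 (fun Z : 'cV[C]_#|GI| => Z k 0) hp; rewrite !mxE => hk.
  by apply: (solve2 hk); ring.
have E2 : P *m p + (2%:R * 'i) *: (P *m c) - 'i *: (P *m c) = 0.
  have := congr1 (mulmx P) E1.
  by rewrite mulmx0 mulmxBr mulmxDr -!scalemxAr !(mulmxA P P) hPP.
have hcP : c = P *m c.
  apply: vec_eq_ring => k.
  have := congr1 (fun Z : 'cV[C]_#|GI| => Z k 0) E1; rewrite !mxE => h1.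
  have := congr1 (fun Z : 'cV[C]_#|GI| => Z k 0) E2; rewrite !mxE => h2.
  exact: (solveC h1 h2).
set r := p + 'i *: c.
have hPr : P *m r = 0.
  rewrite /r mulmxDr -scalemxAr.
  apply: vec_eq_ring => k.
  have := congr1 (fun Z : 'cV[C]_#|GI| => Z k 0) E2; rewrite !mxE => h2.
  exact: solveR h2.
have hQr : Qm^T *m (Tm *m r) = 0.
  have h1 : Qm *m (MI *m Qm^T *m Tm *m r) = 0 by rewrite -hPr hP !mulmxA.
  have h2 := Qinj h1.
  have -> : Qm^T *m (Tm *m r) = M *m (MI *m Qm^T *m Tm *m r).
    by rewrite !mulmxA hMMI mul1mx.
  by rewrite h2 mulmx0.
have hRB := F3 hQr.
have [w hw] : exists w, Rm *m w = u.
  apply: (@range_R u (MI *m Qm^T *m Tm *m c)).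
  by rewrite -/c {1}hcP hP !mulmxA.
have hKu : K *m u = Bm^T *m Tm *m p + f by rewrite /u mulmxA hKN mul1mx.
have hAu : Am *m u = Bm^T *m (Tm *m r) + f.
  have : K *m u = Am *m u - 'i *: (Bm^T *m Tm *m c).
    by rewrite /K /Kmx mulmxBl -scalemxAl /c !mulmxA.
  rewrite hKu => /eqP; rewrite eq_sym subr_eq => /eqP ->.
  by rewrite /r !mulmxDr -!scalemxAr !mulmxA addrAC.
have hRAu : Rm^T *m (Am *m u) = Rm^T *m f.
  by rewrite hAu mulmxDr mulmxA hRB add0r.
have huO : uO = w.
  have -> : uO = invmx (Rm^T *m Rm) *m ((Rm^T *m Rm) *m w) by rewrite /uO -hw !mulmxA.
  by rewrite mulKmx // RtR_unit.
split.
- by exists w.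
- by rewrite huO.
- by rewrite huO -!mulmxA hw hRAu.
- move=> v hv.
  rewrite -(mulKmx hA2 v) hv huO.
  by rewrite -(mulKmx hA2 w) -!mulmxA hw hRAu !mulmxA.
Qed.

End S.

Theorem mainTheorem11 (C : numClosedFieldType) (E : finType) (J : nat)
  (Ej : 'I_J -> {set E}) (Gam : {set E})
  (Aj Tj : 'I_J -> E -> E -> C)
  (hcover : \bigcup_(j < J) Ej j = [set: E])
  (hSigma : Sigma Ej \subset Gam)
  (hT : forall j : 'I_J, real_sym_pd (Gam :&: Ej j) (Tj j))
  (hA1 : forall v : 'cV[C]_(#|Eidx Ej|),
     'Im (((map_mx Num.conj v)^T *m Amx Ej Aj *m v) ord0 ord0) <= 0)
  (hA2 : (Rmx C Ej)^T *m Amx Ej Aj *m Rmx C Ej \in unitmx)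
  (f : 'cV[C]_(#|Eidx Ej|)) (p : 'cV[C]_(#|Gidx Ej Gam|))
  (hp : (1%:M + PImx Ej Gam Tj *m Smx Ej Gam Aj Tj) *m p
        = - (2%:R * 'i) *: (PImx Ej Gam Tj *m Bmx C Ej Gam
                            *m invmx (Kmx Ej Gam Aj Tj) *m f)) :
  let u := invmx (Kmx Ej Gam Aj Tj) *m ((Bmx C Ej Gam)^T *m Tmx Ej Gam Tj *m p + f) in
  let uO := invmx ((Rmx C Ej)^T *m Rmx C Ej) *m (Rmx C Ej)^T *m u in
  [/\ exists w : 'cV[C]_(#|E|), Rmx C Ej *m w = u,
      Rmx C Ej *m uO = u,
      (Rmx C Ej)^T *m Amx Ej Aj *m Rmx C Ej *m uO = (Rmx C Ej)^T *m f &
      forall v : 'cV[C]_(#|E|),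
        (Rmx C Ej)^T *m Amx Ej Aj *m Rmx C Ej *m v = (Rmx C Ej)^T *m f -> v = uO].
Proof. exact (@main_sec C E J Ej Gam Aj Tj hcover hSigma hT hA1 hA2 f p hp). Qed.
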